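(* For every pure state $|\psi\rangle\in\mathcal{H}'$ and every Z$_2$-invariant measurement $\{\mathcal{E}_\mu\}$ such that for each outcome $\mu$ with $w_\mu:=\mathrm{Tr}\,\mathcal{E}_\mu(|\psi\rangle\langle\psi|)>0$ we have $\mathcal{E}_\mu(|\psi\rangle\langle\psi|)=w_\mu|\phi_\mu\rangle\langle\phi_\mu|$ for a pure state $|\phi_\mu\rangle$, $$\sum_\mu w_\mu\,\mathcal{C}(|\phi_\mu\rangle)\le\mathcal{C}(|\psi\rangle).$$ That is, $\mathcal{C}$ is an ensemble Z$_2$-frameness monotone.
   Context: $\mathcal{H}'$ is a two-dimensional Hilbert space with orthonormal basis $|0\rangle,|1\rangle$; $\pi=|0\rangle\langle0|-|1\rangle\langle1|$. A Z$_2$-invariant operation is a completely positive, trace-nonincreasing linear map $\mathcal{E}$ on operators on $\mathcal{H}'$ with $\mathcal{E}(\pi X\pi)=\pi\mathcal{E}(X)\pi$ for all $X$. A Z$_2$-invariant measurement is a (countable) family $\{\mathcal{E}_\mu\}$ of Z$_2$-invariant operations whose sum is trace-preserving. For a pure state $|\chi\rangle\in\mathcal{H}'$, $\mathcal{C}(|\chi\rangle)=2\min\{|\langle0|\chi\rangle|^2,|\langle1|\chi\rangle|^2\}$. *)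

(* Defs.v *)
From HB Require Import structures.
From mathcomp Require Import all_boot all_order all_algebra.
From mathcomp Require Import all_classical all_reals.
From mathcomp Require Import ereal topology normedtype sequences.
From mathcomp Require Import complex.
Set Implicit Arguments. Unset Strict Implicit. Unset Printing Implicit Defensive.
Import Order.TTheory GRing.Theory Num.Theory numFieldNormedType.Exports.
Local Open Scope classical_set_scope.
Local Open Scope ring_scope.

Section QubitDefs.
Variable R : realType.
Local Notation C := R[i].

Definition sqmod (z : C) : R := (complex.Re z) ^+ 2 + (complex.Im z) ^+ 2.

(* H' = C^2 with orthonormal basis |0>, |1> (the standard basis);
   vectors are column vectors. *)
Definition pure_state (v : 'cV[C]_2) : Prop :=
  sqmod (v ord0 ord0) + sqmod (v (@Ordinal 2 1 isT) ord0) = 1.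

Definition ketbra (v : 'cV[C]_2) : 'M[C]_2 := v *m (map_mx Num.conj v)^T.

Definition piZ2 : 'M[C]_2 := \matrix_(i < 2, j < 2) if i == j then
  (if i == ord0 then 1 else -1) else 0.

(* Positive semidefiniteness of a block operator on C^n (x) H',
   given by its n x n blocks X a c (operators on H'):
   <v, X v> >= 0 (real nonnegative) for every vector v in C^n (x) C^2. *)
Definition block_psd (n : nat) (X : 'I_n -> 'I_n -> 'M[C]_2) : Prop :=
  forall v : 'I_n -> 'I_2 -> C,
    0 <= \sum_(a < n) \sum_(c < n) \sum_(b < 2) \sum_(d < 2)
           Num.conj (v a b) * X a c b d * v c d.

Definition psd (X : 'M[C]_2) : Prop := block_psd (fun _ _ : 'I_1 => X).

Definition linear_map (E : 'M[C]_2 -> 'M[C]_2) : Prop :=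
  forall (a : C) (X Y : 'M[C]_2), E (a *: X + Y) = a *: E X + E Y.

(* complete positivity: id_n (x) E is positive for every n *)
Definition completely_positive (E : 'M[C]_2 -> 'M[C]_2) : Prop :=
  forall (n : nat) (X : 'I_n -> 'I_n -> 'M[C]_2),
    block_psd X -> block_psd (fun a c => E (X a c)).

Definition trace_nonincreasing (E : 'M[C]_2 -> 'M[C]_2) : Prop :=
  forall X : 'M[C]_2, psd X -> \tr (E X) <= \tr X.

Definition operation (E : 'M[C]_2 -> 'M[C]_2) : Prop :=
  [/\ linear_map E, completely_positive E & trace_nonincreasing E].

Definition Z2_invariant_operation (E : 'M[C]_2 -> 'M[C]_2) : Prop :=
  operation E /\
  forall X : 'M[C]_2, E (piZ2 *m X *m piZ2) = piZ2 *m E X *m piZ2.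

(* A (countable) measurement, outcomes indexed by nat (a finite measurement
   is obtained by padding with zero operations): each E mu is a
   Z2-invariant operation and sum_mu E mu is trace preserving, i.e.
   sum_mu Tr (E mu X) = Tr X for every X (complex series: real and
   imaginary parts converge). *)
Definition Z2_invariant_measurement (E : nat -> 'M[C]_2 -> 'M[C]_2) : Prop :=
  (forall mu, Z2_invariant_operation (E mu)) /\
  forall X : 'M[C]_2,
    (fun n : nat => \sum_(mu < n) complex.Re (\tr (E mu X)))
       @ \oo --> (complex.Re (\tr X) : R) /\
    (fun n : nat => \sum_(mu < n) complex.Im (\tr (E mu X)))
       @ \oo --> (complex.Im (\tr X) : R).

Definition frameness (v : 'cV[C]_2) : R :=
  2 * Num.min (sqmod (v ord0 ord0)) (sqmod (v (@Ordinal 2 1 isT) ord0)).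

End QubitDefs.

(* Main.v *)
Require Import Defs.
From HB Require Import structures.
From mathcomp Require Import all_boot all_order all_algebra.
From mathcomp Require Import all_classical all_reals.
From mathcomp Require Import ereal topology normedtype sequences.
From mathcomp Require Import complex.
From mathcomp Require Import ring lra.
Import Order.TTheory GRing.Theory Num.Theory numFieldNormedType.Exports.
Local Open Scope classical_set_scope.
Local Open Scope ring_scope.
Set Implicit Arguments. Unset Strict Implicit.

Section Helpers.
Variable R : realType.
Local Notation C := R[i].
Local Notation i0 := (@ord0 1).
Local Notation i1 := (@Ordinal 2 1 isT).

Lemma sum2 (V : nmodType) (F : 'I_2 -> V) : \sum_(i < 2) F i = F i0 + F i1.
Proof. by rewrite big_ord_recl big_ord1; congr (_ + F _); apply: val_inj. Qed.

Lemma ord2_cases (k : 'I_2) : k = i0 \/ k = i1.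
Proof. case: k => [[|[|n]] Hn]; [left|right|]; try exact: val_inj. by []. Qed.

Lemma conjE (a b : R) : Num.conj (a +i* b)%C = (a -i* b)%C.
Proof. by []. Qed.

Lemma sqmodE (a b : R) : sqmod (a +i* b)%C = a ^+ 2 + b ^+ 2.
Proof. by []. Qed.

Lemma sqmod_ge0 (x : C) : 0 <= sqmod x.
Proof. case: x => a b; rewrite sqmodE; nra. Qed.

Lemma sqmodM (x y : C) : sqmod (x * y) = sqmod x * sqmod y.
Proof. case: x => a b; case: y => c d; simpc; rewrite !sqmodE; ring. Qed.

Lemma sqmodJ (x : C) : sqmod (Num.conj x) = sqmod x.
Proof. case: x => a b; rewrite conjE !sqmodE; ring. Qed.

Lemma mulJ (x : C) : x * Num.conj x = (sqmod x)%:C%C.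
Proof. case: x => a b; rewrite conjE; simpc; rewrite sqmodE /=. 
 apply/eqP; rewrite eq_complex /=; apply/andP; split; apply/eqP; ring. Qed.

Lemma sqmodD (x y : C) : sqmod (x + y) = sqmod x + sqmod y + 2 * complex.Re (x * Num.conj y).
Proof. case: x => a b; case: y => c d; rewrite conjE; simpc; rewrite !sqmodE /=; ring. Qed.

Lemma Re_sq_le (x : C) : complex.Re x ^+ 2 <= sqmod x.
Proof. case: x => a b; rewrite sqmodE /=; nra. Qed.

End Helpers.

Section Core.
Variable R : realType.

Lemma core_uv (al be p00 p01 p10 p11 qx qz K : R) :
  0 <= al -> 0 <= be -> 0 <= p00 -> 0 <= p01 -> 0 <= p10 -> 0 <= p11 ->
  0 <= qx -> 0 <= qz -> qx <= p00 * p11 -> qz <= p01 * p10 ->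
  K ^+ 2 <= (al * be) ^+ 2 * qx * qz ->
  (al * p00 + be * p10) * (al * p01 + be * p11) = al * be * (qx + qz) + 2 * K ->
  al ^+ 2 * p00 * p01 = be ^+ 2 * p10 * p11.
Proof.
move=> ha hb h00 h01 h10 h11 hqx hqz bx bz hK hE.
set u := al ^+ 2 * p00 * p01; set v := be ^+ 2 * p10 * p11.
have hab : 0 <= al * be by nra.
have h1 : al * be * qx <= al * be * (p00 * p11) by nra.
have h2 : al * be * qz <= al * be * (p01 * p10) by nra.
have hid : (al * p00 + be * p10) * (al * p01 + be * p11) = u + v + al * be * (p00 * p11) + al * be * (p01 * p10) by rewrite /u /v; ring.
have hid2 : al * be * (qx + qz) = al * be * qx + al * be * qz by ring.
have huv : u + v <= 2 * K by lra.
have hu : 0 <= u by rewrite /u !mulr_ge0 ?exprn_ge0.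
have hv : 0 <= v by rewrite /v !mulr_ge0 ?exprn_ge0.
have h3 : (u + v) ^+ 2 <= 4 * K ^+ 2 by nra.
have h4 : (al * be) ^+ 2 * qx * qz <= (al * be) ^+ 2 * (p00 * p11) * (p01 * p10).
  have h5 : qx * qz <= (p00 * p11) * (p01 * p10) by nra.
  have h6 : 0 <= (al * be) ^+ 2 by nra.
  nra.
have h7 : (al * be) ^+ 2 * (p00 * p11) * (p01 * p10) = u * v by rewrite /u /v; ring.
have h8 : (u - v) ^+ 2 <= 0 by nra.
have : u - v = 0 by nra.
by move/eqP; rewrite subr_eq0 => /eqP.
Qed.

Lemma core_disj (al be p00 p01 p10 p11 : R) :
  0 <= al -> 0 <= be -> 0 <= p00 -> 0 <= p01 -> 0 <= p10 -> 0 <= p11 ->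
  al ^+ 2 * p00 * p01 = be ^+ 2 * p10 * p11 ->
  (al * p00 + be * p10 <= al * (p00 + p01) \/ al * p01 + be * p11 <= al * (p00 + p01)) /\
  (al * p00 + be * p10 <= be * (p10 + p11) \/ al * p01 + be * p11 <= be * (p10 + p11)).
Proof.
move=> ha hb h00 h01 h10 h11 e.
split.
- case: (lerP (al * p00 + be * p10) (al * (p00 + p01))) => h1; first by left.
  case: (lerP (al * p01 + be * p11) (al * (p00 + p01))) => h2; first by right.
  exfalso.
  have g1 : al * p01 < be * p10 by lra.
  have g2 : al * p00 < be * p11 by lra.
  have q0 : 0 <= al * p00 by rewrite mulr_ge0.
  have q1 : 0 <= al * p01 by rewrite mulr_ge0.
  have k1 : (al * p01) * (al * p00) <= (al * p01) * (be * p11).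
    by rewrite ler_wpM2l // ltW.
  have k2 : (al * p01) * (be * p11) < (be * p10) * (be * p11).
    by rewrite ltr_pM2r //; lra.
  have : al ^+ 2 * p00 * p01 = (al * p01) * (al * p00) by ring.
  have : be ^+ 2 * p10 * p11 = (be * p10) * (be * p11) by ring.
  lra.
- case: (lerP (al * p00 + be * p10) (be * (p10 + p11))) => h1; first by left.
  case: (lerP (al * p01 + be * p11) (be * (p10 + p11))) => h2; first by right.
  exfalso.
  have g1 : be * p11 < al * p00 by lra.
  have g2 : be * p10 < al * p01 by lra.
  have q0 : 0 <= be * p10 by rewrite mulr_ge0.
  have q1 : 0 <= be * p11 by rewrite mulr_ge0.
  have k1 : (be * p11) * (be * p10) <= (be * p11) * (al * p01).
    by rewrite ler_wpM2l // ltW.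
  have k2 : (be * p11) * (al * p01) < (al * p00) * (al * p01).
    by rewrite ltr_pM2r //; lra.
  have : al ^+ 2 * p00 * p01 = (al * p00) * (al * p01) by ring.
  have : be ^+ 2 * p10 * p11 = (be * p11) * (be * p10) by ring.
  lra.
Qed.

End Core.

Section Q.
Variable R : realType.
Local Notation C := R[i].

Lemma quad_bound (P Q q : R) : 0 <= P -> 0 <= Q -> 0 <= q ->
  (forall r, 0 <= P * q * r ^+ 2 - 2 * q * r + Q) -> q <= P * Q.
Proof.
move=> hP hQ hq H.
have [q0|qpos] := eqVneq q 0; first by rewrite q0 mulr_ge0.
have qp : 0 < q by rewrite lt_def qpos hq.
have [P0|Ppos] := eqVneq P 0.
  have := H ((Q + 1) / (2 * q)).
  rewrite P0 mul0r mul0r add0r.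
  have -> : 2 * q * ((Q + 1) / (2 * q)) = Q + 1.
    by rewrite mulrC -mulrA mulVf ?mulr1 // mulf_neq0 // pnatr_eq0.
  lra.
have Pp : 0 < P by rewrite lt_def Ppos hP.
have := H (P^-1).
have e1 : P * q * P^-1 ^+ 2 = q * P^-1 by rewrite expr2 mulrA mulrAC (mulrC P) -(mulrA q) mulfV // mulr1.
rewrite e1 => h.
have h2 : q * P^-1 <= Q by lra.
have : q * P^-1 * P <= Q * P by rewrite ler_pM2r.
rewrite -mulrA mulVf // mulr1 mulrC. done.
Qed.

Lemma herm2 (P x w Q : C) :
  (forall s t : C, 0 <= Num.conj s * P * s + Num.conj s * x * t + Num.conj t * w * s + Num.conj t * Q * t) ->
  [/\ complex.Im P = 0, complex.Im Q = 0, 0 <= complex.Re P, 0 <= complex.Re Q &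
      w = Num.conj x /\ sqmod x <= complex.Re P * complex.Re Q].
Proof.
case: P => Pr Pi; case: x => xr xi; case: w => wr wi; case: Q => Qr Qi /= H.
have G : forall a b c d : R, _ := fun a b c d => H (a +i* b)%C (c +i* d)%C.
have E (a b c d : R) := G a b c d.
move: (E 1 0 0 0) (E 0 0 1 0) (E 1 0 1 0) (E 1 0 0 1); rewrite !conjE.
simpc => /andP[/eqP a1 a2] /andP[/eqP b1 b2] /andP[/eqP c1 c2] /andP[/eqP d1 d2].
have hPi : Pi = 0 by lra.
have hQi : Qi = 0 by lra.
have hwi : wi = - xi by lra.
have hwr : wr = xr by lra.
have hPr : 0 <= Pr by lra.
have hQr : 0 <= Qr by lra.
split => //; split.
  by rewrite hwi hwr.
rewrite sqmodE; apply: quad_bound => //; first nra.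
move=> r; move: (E (- r * xr) (- r * xi) 1 0); rewrite !conjE.
simpc => /andP[_ ]; rewrite hwi hwr hPi /=.
move=> h; nra.
Qed.
End Q.

Section M.
Variable R : realType.
Local Notation C := R[i].
Local Notation i0 := (@ord0 1).
Local Notation i1 := (@Ordinal 2 1 isT).

Lemma choi_psd : block_psd (fun a c : 'I_2 => (delta_mx a c : 'M[C]_2)).
Proof.
move=> v; rewrite !sum2 !mxE /=.
rewrite !mulr0 !mul0r !mulr1 !addr0 !add0r.
rewrite (_ : _ + _ = (v i0 i0 + v i1 i1) * Num.conj (v i0 i0 + v i1 i1)); last first.
  by rewrite rmorphD /=; ring.
by rewrite mulJ ler0c sqmod_ge0.
Qed.

Lemma blockA (F : 'I_2 -> 'I_2 -> 'M[C]_2) : block_psd F -> forall s t : C,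
  0 <= Num.conj s * F i0 i0 i0 i0 * s + Num.conj s * F i0 i1 i0 i1 * t
     + Num.conj t * F i1 i0 i1 i0 * s + Num.conj t * F i1 i1 i1 i1 * t.
Proof.
move=> H s t; move: (H (fun a b : 'I_2 => if a == i0 then (if b == i0 then s else 0) else (if b == i0 then 0 else t))).
rewrite !sum2 /= rmorph0 !mulr0 !mul0r !addr0 !add0r.
by rewrite -!addrA.
Qed.

Lemma blockB (F : 'I_2 -> 'I_2 -> 'M[C]_2) : block_psd F -> forall s t : C,
  0 <= Num.conj s * F i0 i0 i1 i1 * s + Num.conj s * F i0 i1 i1 i0 * t
     + Num.conj t * F i1 i0 i0 i1 * s + Num.conj t * F i1 i1 i0 i0 * t.
Proof.
move=> H s t; move: (H (fun a b : 'I_2 => if a == i0 then (if b == i1 then s else 0) else (if b == i0 then t else 0))).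
rewrite !sum2 /= rmorph0 !mulr0 !mul0r !addr0 !add0r.
by rewrite -!addrA.
Qed.
End M.

Section M.
Variable R : realType.
Local Notation C := R[i].
Local Notation i0 := (@ord0 1).
Local Notation i1 := (@Ordinal 2 1 isT).
Local Notation z0 := (@ord0 0).

Definition sg (i : 'I_2) : C := if i == i0 then 1 else -1.

Lemma sg_neq0 i : sg i != 0.
Proof. by rewrite /sg; case: ifP => _; rewrite ?oppr_eq0 oner_eq0. Qed.

Lemma lin0 (E : 'M[C]_2 -> 'M[C]_2) : linear_map E -> E 0 = 0.
Proof.
move=> L; have := L 1 0 0; rewrite !scale1r addr0 => e.
by apply: (addrI (E 0)); rewrite addr0 -e.
Qed.

Lemma linZ (E : 'M[C]_2 -> 'M[C]_2) : linear_map E -> forall k X, E (k *: X) = k *: E X.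
Proof. by move=> L k X; have := L k X 0; rewrite addr0 (lin0 L) addr0. Qed.

Lemma linD (E : 'M[C]_2 -> 'M[C]_2) : linear_map E -> forall X Y, E (X + Y) = E X + E Y.
Proof. by move=> L X Y; have := L 1 X Y; rewrite !scale1r. Qed.

Lemma pi_entry (M : 'M[C]_2) i j : (piZ2 R *m M *m piZ2 R) i j = sg i * sg j * M i j.
Proof.
rewrite !mxE !sum2 !mxE !sum2 !mxE /sg.
by case: (ord2_cases i) => ->; case: (ord2_cases j) => -> /=; ring.
Qed.

Lemma pi_delta (a c : 'I_2) : piZ2 R *m delta_mx a c *m piZ2 R = (sg a * sg c) *: (delta_mx a c : 'M[C]_2).
Proof.
apply/matrixP => i j; rewrite pi_entry !mxE.
rewrite /sg.
by case: (ord2_cases a) => ->; case: (ord2_cases c) => ->; case: (ord2_cases i) => ->;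
  case: (ord2_cases j) => -> /=; ring.
Qed.

Lemma parity (E : 'M[C]_2 -> 'M[C]_2) (a c i j : 'I_2) :
  Z2_invariant_operation E -> sg a * sg c = - (sg i * sg j) ->
  E (delta_mx a c) i j = 0.
Proof.
move=> [[L _ _] inv] hs.
have := inv (delta_mx a c); rewrite pi_delta linZ // => /matrixP/(_ i j).
rewrite pi_entry mxE hs => e.
have : (2 * (sg i * sg j)) * E (delta_mx a c) i j = 0.
  by rewrite mulr_natl mulr2n mulrDl -{1}e; ring.
move/eqP; rewrite mulf_eq0 => /orP[|/eqP //].
rewrite mulf_eq0 pnatr_eq0 /= mulf_eq0 (negbTE (sg_neq0 i)) (negbTE (sg_neq0 j)). by [].
Qed.

Lemma ketbra_dec (v : 'cV[C]_2) :
  ketbra v = (v i0 z0 * Num.conj (v i0 z0)) *: delta_mx i0 i0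
           + (v i1 z0 * Num.conj (v i1 z0)) *: delta_mx i1 i1
           + (v i0 z0 * Num.conj (v i1 z0)) *: delta_mx i0 i1
           + (v i1 z0 * Num.conj (v i0 z0)) *: delta_mx i1 i0.
Proof.
apply/matrixP => i j; rewrite !mxE big_ord1 !mxE.
by case: (ord2_cases i) => ->; case: (ord2_cases j) => -> /=; ring.
Qed.

End M.

Section P.
Variable R : realType.
Local Notation C := R[i].
Local Notation i0 := (@ord0 1).
Local Notation i1 := (@Ordinal 2 1 isT).
Local Notation z0 := (@ord0 0).

Lemma realC (z : C) : complex.Im z = 0 -> z = (complex.Re z)%:C%C.
Proof. by case: z => a b /= ->. Qed.

Lemma rc_lin (x y u v : R) : x%:C%C * u%:C%C + y%:C%C * v%:C%C = (x * u + y * v)%:C%C :> C.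
Proof. by apply/eqP; rewrite eq_complex /=; apply/andP; split; apply/eqP; ring. Qed.

Lemma rc_add (x y : R) : x%:C%C + y%:C%C = (x + y)%:C%C :> C.
Proof. by apply/eqP; rewrite eq_complex /=; apply/andP; split; apply/eqP; ring. Qed.

Lemma conj_swap (u v : C) : v * Num.conj u = Num.conj (u * Num.conj v).
Proof.
case: u => a b; case: v => c d; rewrite !conjE; simpc.
by apply/eqP; rewrite eq_complex /=; apply/andP; split; apply/eqP; ring.
Qed.

Lemma sq3 (c x y : C) : sqmod (c * x * Num.conj (Num.conj c * Num.conj y)) = sqmod c ^+ 2 * sqmod x * sqmod y.
Proof. rewrite sqmodM sqmodJ sqmodM sqmodM !sqmodJ; ring. Qed.

Lemma sq2 (c x y : C) : sqmod (c * x + Num.conj c * Num.conj y) =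
  sqmod c * sqmod x + sqmod c * sqmod y + 2 * complex.Re (c * x * Num.conj (Num.conj c * Num.conj y)).
Proof. by rewrite sqmodD !sqmodM !sqmodJ. Qed.

Lemma minlem (W q0 q1 B : R) : 0 <= W -> (W * q0 <= B \/ W * q1 <= B) ->
  W * (2 * Num.min q0 q1) <= 2 * B.
Proof.
move=> hW h; case: (leP q0 q1) => hs.
  have : W * q0 <= W * q1 by rewrite ler_wpM2l.
  case: h; lra.
have : W * q1 <= W * q0 by rewrite ler_wpM2l // ltW.
case: h; lra.
Qed.

Lemma frameness_ge0 (v : 'cV[C]_2) : 0 <= frameness v.
Proof. by rewrite /frameness mulr_ge0 // le_min !sqmod_ge0. Qed.

Lemma per_mu (E : 'M[C]_2 -> 'M[C]_2) (psi phi : 'cV[C]_2) :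
  Z2_invariant_operation E ->
  (0 < \tr (E (ketbra psi)) -> pure_state phi /\ E (ketbra psi) = \tr (E (ketbra psi)) *: ketbra phi) ->
  0 <= complex.Re (\tr (E (ketbra psi))) * frameness phi /\
  complex.Re (\tr (E (ketbra psi))) * frameness phi
     <= 2 * sqmod (psi i0 z0) * complex.Re (\tr (E (delta_mx i0 i0))) /\
  complex.Re (\tr (E (ketbra psi))) * frameness phi
     <= 2 * sqmod (psi i1 z0) * complex.Re (\tr (E (delta_mx i1 i1))).
Proof.
move=> Hinv Hpure.
have [[L CP _] _] := Hinv.
have CPF := CP 2 _ (@choi_psd R).
have [hA1 hA2 hA3 hA4 [hA5 hA6]] := herm2 (blockA CPF).
have [hB1 hB2 hB3 hB4 [hB5 hB6]] := herm2 (blockB CPF).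
move: hA1 hA2 hA3 hA4 hA5 hA6 hB1 hB2 hB3 hB4 hB5 hB6 => /=.
move=> i00 i11 g00 g11 hw bx i01 i10 g01 g10 hz bz.
set F00 := E (delta_mx i0 i0); set F11 := E (delta_mx i1 i1).
set F01 := E (delta_mx i0 i1); set F10 := E (delta_mx i1 i0).
set p00 := complex.Re (F00 i0 i0); set p01 := complex.Re (F00 i1 i1).
set p10 := complex.Re (F11 i0 i0); set p11 := complex.Re (F11 i1 i1).
have e00 : F00 i0 i0 = p00%:C%C by apply: realC.
have e01 : F00 i1 i1 = p01%:C%C by apply: realC.
have e10 : F11 i0 i0 = p10%:C%C by apply: realC.
have e11 : F11 i1 i1 = p11%:C%C by apply: realC.
have s1 : sg R i0 * sg R i1 = - (sg R i0 * sg R i0) :> C by rewrite /sg /=; ring.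
have s2 : sg R i0 * sg R i1 = - (sg R i1 * sg R i1) :> C by rewrite /sg /=; ring.
have s3 : sg R i1 * sg R i0 = - (sg R i0 * sg R i0) :> C by rewrite /sg /=; ring.
have s4 : sg R i1 * sg R i0 = - (sg R i1 * sg R i1) :> C by rewrite /sg /=; ring.
have s5 : sg R i0 * sg R i0 = - (sg R i0 * sg R i1) :> C by rewrite /sg /=; ring.
have s6 : sg R i1 * sg R i1 = - (sg R i0 * sg R i1) :> C by rewrite /sg /=; ring.
have z1 : F01 i0 i0 = 0 := parity Hinv s1.
have z2 : F01 i1 i1 = 0 := parity Hinv s2.
have z3 : F10 i0 i0 = 0 := parity Hinv s3.
have z4 : F10 i1 i1 = 0 := parity Hinv s4.
have z5 : F00 i0 i1 = 0 := parity Hinv s5.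
have z6 : F11 i0 i1 = 0 := parity Hinv s6.
set a := psi i0 z0; set b := psi i1 z0.
set al := sqmod a; set be := sqmod b.
have ER : E (ketbra psi) = (a * Num.conj a) *: F00 + (b * Num.conj b) *: F11
     + (a * Num.conj b) *: F01 + (b * Num.conj a) *: F10.
  by rewrite ketbra_dec !(linD L) !(linZ L).
have E00 : E (ketbra psi) i0 i0 = (al * p00 + be * p10)%:C%C.
  by rewrite ER !mxE z1 z3 e00 e10 !mulJ !mulr0 !addr0 rc_lin.
have E11 : E (ketbra psi) i1 i1 = (al * p01 + be * p11)%:C%C.
  by rewrite ER !mxE z2 z4 e01 e11 !mulJ !mulr0 !addr0 rc_lin.
have E01 : E (ketbra psi) i0 i1 = (a * Num.conj b) * F01 i0 i1 + (b * Num.conj a) * F10 i0 i1.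
  by rewrite ER !mxE z5 z6 !mulr0 !add0r.
have trE : \tr (E (ketbra psi)) = (al * p00 + be * p10 + (al * p01 + be * p11))%:C%C.
  by rewrite /mxtrace sum2 E00 E11 rc_add.
have tr0 : complex.Re (\tr F00) = p00 + p01.
  by rewrite /mxtrace sum2 e00 e01.
have tr1 : complex.Re (\tr F11) = p10 + p11.
  by rewrite /mxtrace sum2 e10 e11.
rewrite tr0 tr1.
have hal : 0 <= al by apply: sqmod_ge0.
have hbe : 0 <= be by apply: sqmod_ge0.
have [pos|npos] := boolP (0 < \tr (E (ketbra psi))); last first.
  have hT : al * p00 + be * p10 + (al * p01 + be * p11) = 0.
    move: npos; rewrite trE ltcE /= eqxx /= -leNgt => h.
    have : 0 <= al * p00 + be * p10 + (al * p01 + be * p11).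
      by rewrite !addr_ge0 // mulr_ge0.
    lra.
  rewrite trE /= hT mul0r.
  split; first by [].
  by split; rewrite !mulr_ge0 // ?addr_ge0.
have [pure ER2] := Hpure pos.
move: pos ER2; rewrite trE ltcE /= eqxx /=.
set T := al * p00 + be * p10 + (al * p01 + be * p11) => Tpos ER2.
rewrite /frameness.
set q0 := sqmod (phi i0 z0); set q1 := sqmod (phi i1 z0).
have Q0 : al * p00 + be * p10 = T * q0.
  have := congr1 (fun M : 'M[C]_2 => M i0 i0) ER2; rewrite /= E00 !mxE big_ord1 !mxE mulJ.
  by move=> e; apply: complexI; rewrite e; apply/eqP; rewrite eq_complex /= !mulr0 !mul0r subr0 addr0 !eqxx.
have Q1 : al * p01 + be * p11 = T * q1.
  have := congr1 (fun M : 'M[C]_2 => M i1 i1) ER2; rewrite /= E11 !mxE big_ord1 !mxE mulJ.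
  by move=> e; apply: complexI; rewrite e; apply/eqP; rewrite eq_complex /= !mulr0 !mul0r subr0 addr0 !eqxx.
have Q2 : sqmod (E (ketbra psi) i0 i1) = (al * p00 + be * p10) * (al * p01 + be * p11).
  rewrite Q0 Q1 ER2 !mxE big_ord1 !mxE !sqmodM sqmodJ.
  rewrite /q0 /q1 [sqmod T%:C%C]/sqmod /=; ring.
have hc : b * Num.conj a = Num.conj (a * Num.conj b) by apply: conj_swap.
rewrite E01 hc hz in Q2.
set c := a * Num.conj b in Q2.
set x := F01 i0 i1 in Q2 bx; set y := F01 i1 i0 in Q2 bz.
have sc : sqmod c = al * be by rewrite /c sqmodM sqmodJ.
set K := complex.Re (c * x * Num.conj (Num.conj c * Num.conj y)).
have HK : K ^+ 2 <= (al * be) ^+ 2 * sqmod x * sqmod y.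
  apply: le_trans (Re_sq_le _) _.
  by rewrite sq3 sc le_eqVlt; apply/orP; left; apply/eqP; ring.
have HE : (al * p00 + be * p10) * (al * p01 + be * p11) = al * be * (sqmod x + sqmod y) + 2 * K.
  by rewrite -Q2 sq2 sc /K; ring.
have huv := core_uv hal hbe g00 g01 g10 g11 (sqmod_ge0 x) (sqmod_ge0 y) bx bz HK HE.
have [D1 D2] := core_disj hal hbe g00 g01 g10 g11 huv.
rewrite Q0 Q1 in D1 D2.
have hTW : 0 <= T by apply: ltW.
split; first by rewrite mulr_ge0 // mulr_ge0 // le_min !sqmod_ge0.
by split; rewrite -mulrA; apply: minlem.
Qed.
End P.

Section P2.
Variable R : realType.
Local Notation C := R[i].
Local Notation i0 := (@ord0 1).
Local Notation i1 := (@Ordinal 2 1 isT).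

Lemma tr_nonneg (E : 'M[C]_2 -> 'M[C]_2) : Z2_invariant_operation E ->
  0 <= complex.Re (\tr (E (delta_mx i0 i0))) /\ 0 <= complex.Re (\tr (E (delta_mx i1 i1))).
Proof.
move=> Hinv; have [[L CP _] _] := Hinv.
have CPF := CP 2 _ (@choi_psd R).
have [hA1 hA2 hA3 hA4 [hA5 hA6]] := herm2 (blockA CPF).
have [hB1 hB2 hB3 hB4 [hB5 hB6]] := herm2 (blockB CPF).
rewrite /mxtrace !sum2 !raddfD /=.
by split; rewrite addr_ge0.
Qed.
End P2.

Lemma psum_le (R : realType) (u : nat -> R) (l : R) :
  (forall n, 0 <= u n) ->
  (fun n : nat => \sum_(mu < n) u mu) @ \oo --> l ->
  forall n, \sum_(mu < n) u mu <= l.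
Proof.
move=> u0 cv n.
have hom : {homo (fun n : nat => \sum_(mu < n) u mu) : n m / (n <= m)%N >-> n <= m}.
  move=> p q pq; rewrite -(subnK pq); elim: (q - p)%N => [|k IH] /=; first by rewrite add0n.
  by rewrite addSn big_ord_recr /= ler_wpDr.
have := nondecreasing_cvgn_le hom (cvgP _ cv) n.
by rewrite (cvg_lim _ cv).
Qed.

Unset Implicit Arguments.

Theorem lemma11 (R : realType) (psi : 'cV[R[i]]_2)
    (E : nat -> 'M[R[i]]_2 -> 'M[R[i]]_2) (phi : nat -> 'cV[R[i]]_2) :
  pure_state psi ->
  Z2_invariant_measurement E ->
  (forall mu : nat, 0 < \tr (E mu (ketbra psi)) ->
     pure_state (phi mu) /\
     E mu (ketbra psi) = \tr (E mu (ketbra psi)) *: ketbra (phi mu)) ->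
  (\sum_(0 <= mu <oo)
      ((complex.Re (\tr (E mu (ketbra psi))) * frameness (phi mu))%:E)
     <= (frameness psi)%:E)%E.
Proof.
move=> _ [Hop Htr] Hpure.
set f := fun mu => complex.Re (\tr (E mu (ketbra psi))) * frameness (phi mu).
have Hf mu := per_mu (Hop mu) (Hpure mu).
have Hn mu := tr_nonneg (Hop mu).
have S0 := @psum_le R _ _ (fun mu => (Hn mu).1) (Htr (delta_mx ord0 ord0)).1.
have S1 := @psum_le R _ _ (fun mu => (Hn mu).2) (Htr (delta_mx (@Ordinal 2 1 isT) (@Ordinal 2 1 isT))).1.
have t0 : complex.Re (\tr (delta_mx (@ord0 1) ord0 : 'M[R[i]]_2)) = 1.
  by rewrite /mxtrace sum2 !mxE /= addr0.
have t1 : complex.Re (\tr (delta_mx (@Ordinal 2 1 isT) (@Ordinal 2 1 isT) : 'M[R[i]]_2)) = 1.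
  by rewrite /mxtrace sum2 !mxE /= add0r.
rewrite t0 in S0; rewrite t1 in S1.
apply: lime_le.
  by apply: is_cvg_nneseries => n _ _; rewrite lee_fin; case: (Hf n).
apply: nearW => n.
rewrite sumEFin lee_fin big_mkord.
set al := sqmod (psi ord0 ord0); set be := sqmod (psi (@Ordinal 2 1 isT) ord0).
have B0 : \sum_(mu < n) f mu <= 2 * al.
  apply: le_trans (_ : \sum_(mu < n) (2 * al * complex.Re (\tr (E mu (delta_mx ord0 ord0)))) <= _).
    by apply: ler_sum => mu _; case: (Hf mu) => _ [].
  rewrite -mulr_sumr; have := S0 n; have : 0 <= 2 * al by rewrite mulr_ge0 // sqmod_ge0.
  by move=> h1 h2; rewrite -{2}(mulr1 (2 * al)) ler_wpM2l.
have B1 : \sum_(mu < n) f mu <= 2 * be.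
  apply: le_trans (_ : \sum_(mu < n) (2 * be * complex.Re (\tr (E mu (delta_mx (@Ordinal 2 1 isT) (@Ordinal 2 1 isT))))) <= _).
    by apply: ler_sum => mu _; case: (Hf mu) => _ [].
  rewrite -mulr_sumr; have := S1 n; have : 0 <= 2 * be by rewrite mulr_ge0 // sqmod_ge0.
  by move=> h1 h2; rewrite -{2}(mulr1 (2 * be)) ler_wpM2l.
rewrite /frameness -/al -/be.
by case: (leP al be) => _; [exact: B0 | exact: B1].
Qed.
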